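(* Let $N\ge 2$ and $x_0<x_1<\dots<x_{N-1}<x_N$. Let $\rho$ be an integrable function on $[x_0,x_N]$, let $G(x,s)$ be the Green function of the boundary value problem $\varphi''(x)=-\rho(x)$, $\varphi(x_0)=\varphi(x_N)=0$ on $[x_0,x_N]$, and let $\varphi(x)=\int_{x_0}^{x_N}G(x,s)\rho(s)\,ds$ be the solution of this problem. Define $$\alpha_j^R=\int_{x_{j-1}}^{x_j}G(x_j,s)\rho(s)\,ds\quad (j=1,\dots,N-1),\qquad \alpha_j^L=\int_{x_{j-1}}^{x_j}G(x_{j-1},s)\rho(s)\,ds\quad (j=2,\dots,N).$$ Then for every $i=1,\dots,N-1$, $$\varphi(x_i)=\sum_{j=1}^{i}\alpha_j^R\,\frac{x_i-x_N}{x_j-x_N}+\sum_{j=i+1}^{N}\alpha_j^L\,\frac{x_i-x_0}{x_{j-1}-x_0}.$$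
   Context: The Green function here is $G(x,s)=\frac{(\min(x,s)-x_0)(x_N-\max(x,s))}{x_N-x_0}$, so that $\varphi(x)=\int_{x_0}^{x_N}G(x,s)\rho(s)\,ds$ solves $\varphi''=-\rho$ with $\varphi(x_0)=\varphi(x_N)=0$. *)

(* Defs.v *)
From HB Require Import structures.
From mathcomp Require Import all_boot all_order all_algebra.
From mathcomp Require Import all_classical all_reals all_analysis.
Set Implicit Arguments. Unset Strict Implicit. Unset Printing Implicit Defensive.
Import Order.TTheory GRing.Theory Num.Theory.
Import numFieldNormedType.Exports.
Local Open Scope classical_set_scope.
Local Open Scope ring_scope.

Definition green {R : realType} (a b x s : R) : R :=
  (Order.min x s - a) * (b - Order.max x s) / (b - a).

Definition green_sol {R : realType} (a b : R) (rho : R -> R) (x : R) : R :=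
  \int[lebesgue_measure]_(s in `[a, b]) (green a b x s * rho s).

Definition alphaR {R : realType} (N : nat) (x : nat -> R) (rho : R -> R)
    (j : nat) : R :=
  \int[lebesgue_measure]_(s in `[x j.-1, x j]) (green (x 0%N) (x N) (x j) s * rho s).

Definition alphaL {R : realType} (N : nat) (x : nat -> R) (rho : R -> R)
    (j : nat) : R :=
  \int[lebesgue_measure]_(s in `[x j.-1, x j])
     (green (x 0%N) (x N) (x j.-1) s * rho s).

(* Main.v *)
Require Import Defs.
From HB Require Import structures.
From mathcomp Require Import all_boot all_order all_algebra.
From mathcomp Require Import all_classical all_reals all_analysis.
From mathcomp Require Import ring lra measurable_realfun.
Import Order.TTheory GRing.Theory Num.Theory.
Import numFieldNormedType.Exports.
Local Open Scope classical_set_scope.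
Local Open Scope ring_scope.
Lemma green_bound {R : realType} {a b y s : R} : a < b -> a <= y <= b -> a <= s <= b ->
  `|green a b y s| <= b - a.
Proof.
move=> ab /andP[ay yb] /andP[a_s sb]; rewrite /green.
have ba : 0 < b - a by rewrite subr_gt0.
rewrite /Order.min /Order.max; case: (ltP y s) => ys.
  rewrite ger0_norm; last by apply: divr_ge0; [apply: mulr_ge0|]; lra.
  rewrite ler_pdivrMr //; nra.
rewrite ger0_norm; last by apply: divr_ge0; [apply: mulr_ge0|]; lra.
rewrite ler_pdivrMr //; nra.
Qed.

Lemma green_meas {R : realType} (a b y : R) (D : set R) :
  measurable_fun D (green a b y).
Proof.
rewrite /green.
apply: measurable_funM; last exact: measurable_cst.
apply: measurable_funM.
  apply: measurable_funB; last exact: measurable_cst.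
  have := measurable_minr (measurable_cst y) (@measurable_id _ _ D).
  by apply: eq_measurable_fun => z _.
apply: measurable_funB; first exact: measurable_cst.
have := measurable_maxr (measurable_cst y) (@measurable_id _ _ D).
by apply: eq_measurable_fun => z _.
Qed.

Lemma green_int (R : realType) (a b y : R) (rho : R -> R) (D : set R) :
  a < b -> a <= y <= b -> @measurable _ (measurableTypeR R) D -> D `<=` `[a, b] ->
  lebesgue_measure.-integrable `[a, b] (EFin \o rho) ->
  lebesgue_measure.-integrable D (EFin \o (fun s => green a b y s * rho s)).
Proof.
move=> ab yab mD Dab irho.
have iD : lebesgue_measure.-integrable D (EFin \o rho).
  by apply: integrableS irho...
have bd : [bounded green a b y s | s in D].
  rewrite /bounded_near; near=> M => s /Dab /=; rewrite in_itv /= => sab.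
  have h := green_bound ab yab sab.
  have hM : b - a <= M by near: M; apply: nbhs_pinfty_ge; exact: num_real.
  exact: (le_trans h hM).
have mh : @measurable_fun _ _ (measurableTypeR R) R D (green a b y).
  exact: green_meas.
have := integrableMr mD mh bd iD.
apply: eq_integrable => //.
Unshelve. all: by end_near.
Qed.

Section Aux.
Context {R : realType}.

Lemma minl {u v : R} : u <= v -> Order.min u v = u.
Proof. by rewrite /Order.min; case: ltP => // h1 h2; lra. Qed.
Lemma minr {u v : R} : v <= u -> Order.min u v = v.
Proof. by rewrite /Order.min; case: ltP => // h1 h2; lra. Qed.
Lemma maxl {u v : R} : v <= u -> Order.max u v = u.
Proof. by rewrite /Order.max; case: ltP => // h1 h2; lra. Qed.
Lemma maxr {u v : R} : u <= v -> Order.max u v = v.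
Proof. by rewrite /Order.max; case: ltP => // h1 h2; lra. Qed.

Lemma sub_itv (a b c d : R) : a <= c -> d <= b -> `[c, d] `<=` `[a, b].
Proof.
move=> ac db s /=; rewrite !in_itv /= => /andP[h1 h2]; apply/andP; split; lra.
Qed.

Lemma xmono (N : nat) (x : nat -> R) : (forall k, (k < N)%N -> x k < x k.+1) ->
  forall m n, (m <= n)%N -> (n <= N)%N -> x m <= x n.
Proof.
move=> hx m; elim=> [|n IH] mn nN.
  by move: mn; rewrite leqn0 => /eqP ->.
move: mn; rewrite leq_eqVlt => /orP[/eqP -> //|mn].
have h := hx n nN.
have := IH mn (ltnW nN); lra.
Qed.

Lemma xsmono (N : nat) (x : nat -> R) : (forall k, (k < N)%N -> x k < x k.+1) ->
  forall m n, (m < n)%N -> (n <= N)%N -> x m < x n.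
Proof.
move=> hx m n mn nN; case: n mn nN => // n mn nN.
have := @xmono N x hx m n mn (ltnW nN); have := hx n nN; lra.
Qed.

Lemma greenR (a b xi xj s : R) : a < b -> s <= xj -> xj <= xi -> xi < b ->
  green a b xi s = (xi - b) / (xj - b) * green a b xj s.
Proof.
move=> ab sj ji ib; rewrite /green.
rewrite (minr (le_trans sj ji)) (maxl (le_trans sj ji)) (minr sj) (maxl sj).
have h1 : xj - b != 0 by apply/eqP; lra.
have h2 : b - a != 0 by apply/eqP; lra.
by field; rewrite ?h1 ?h2.
Qed.

Lemma greenL (a b xi xj s : R) : a < xi -> xi <= xj -> xj <= s ->
  green a b xi s = (xi - a) / (xj - a) * green a b xj s.
Proof.
move=> ai ij js; rewrite /green.
rewrite (minl (le_trans ij js)) (maxr (le_trans ij js)) (minl js) (maxr js).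
have h1 : xj - a != 0 by apply/eqP; lra.
case: (eqVneq (b - a) 0) => h2.
  by rewrite h2 !invr0 !mulr0.
by field; rewrite ?h1 ?h2.
Qed.

End Aux.

Lemma split_int {R : realType} (N : nat) (x : nat -> R) (f : R -> R) :
  (forall k, (k < N)%N -> x k < x k.+1) ->
  (forall c d, x 0%N <= c -> c <= d -> d <= x N ->
     lebesgue_measure.-integrable `[c, d] (EFin \o f)) ->
  forall k, (k <= N)%N ->
  \int[lebesgue_measure]_(s in `[x 0%N, x k]) f s =
  \sum_(1 <= j < k.+1) \int[lebesgue_measure]_(s in `[x j.-1, x j]) f s.
Proof.
move=> hx hi; elim=> [|k IH] kN.
  by rewrite set_itv1 Rintegral_set1 big_geq.
rewrite big_nat_recr //= -IH ?(ltnW kN) //.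
have h0k := @xmono R N x hx 0 k isT (ltnW kN).
have hk := hx k kN.
have hN := @xmono R N x hx k.+1 N kN (leqnn N).
have h := @Rintegral_itvB R f (BLeft (x 0%N)) (BRight (x k.+1)) (x k)
  (hi _ _ (lexx _) (ltW (le_lt_trans h0k hk)) hN).
rewrite !bnd_simp in h.
have h' := h h0k (ltW hk).
rewrite Rintegral_itv_obnd_cbnd in h'; last first.
  apply: integrableS (hi (x k) (x k.+1) h0k (ltW hk) hN) => //.
  by apply: subset_itvr; rewrite bnd_simp.
rewrite -h'; lra.
Qed.

Theorem theorem1 (R : realType) (N : nat) (x : nat -> R) (rho : R -> R) :
  (2 <= N)%N ->
  (forall k : nat, (k < N)%N -> x k < x k.+1) ->
  lebesgue_measure.-integrable `[x 0%N, x N] (EFin \o rho) ->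
  forall i : nat, (1 <= i)%N -> (i <= N.-1)%N ->
    green_sol (x 0%N) (x N) rho (x i) =
      \sum_(1 <= j < i.+1) alphaR N x rho j * ((x i - x N) / (x j - x N))
    + \sum_(i.+1 <= j < N.+1) alphaL N x rho j * ((x i - x 0%N) / (x j.-1 - x 0%N)).
Proof.
move=> N2 hx irho i i1 iN.
have iN' : (i < N)%N by case: N N2 iN {hx irho} => // n _ /=; rewrite ltnS.
have xle := @xmono R N x hx.
have xlt := @xsmono R N x hx.
have ab : x 0%N < x N by apply: xlt => //; exact: leq_trans _ N2.
have gint : forall y c d, x 0%N <= y <= x N -> x 0%N <= c -> c <= d -> d <= x N ->
    lebesgue_measure.-integrable `[c, d]
      (EFin \o (fun s => green (x 0%N) (x N) y s * rho s)).
  move=> y c d hy h1 h2 h3; apply: green_int => //.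
  exact: sub_itv.
have hyi : x 0%N <= x i <= x N by apply/andP; split; apply: xle => //; exact: ltnW.
rewrite /green_sol (@split_int R N x _ hx (fun c d => gint (x i) c d hyi)) //.
rewrite (big_cat_nat _ (n := i.+1)) //=; last by rewrite ltnS ltnW.
congr (_ + _).
  apply: eq_big_nat => j /andP[j1 ji].
  have jN : (j < N)%N by apply: leq_ltn_trans iN'; rewrite -ltnS.
  have hyj : x 0%N <= x j <= x N by apply/andP; split; apply: xle => //; exact: ltnW.
  rewrite /alphaR mulrC -RintegralZl //; last first.
    apply: gint => //.
    - by apply: xle => //; exact: leq_trans (leq_pred _) (ltnW jN).
    - by apply: xle; [exact: leq_pred | exact: ltnW].
    - by apply: xle => //; exact: ltnW.
  apply: eq_Rintegral => s; rewrite inE /= in_itv /= => /andP[s1 s2].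
  have e : green (x 0%N) (x N) (x i) s = (x i - x N) / (x j - x N) * green (x 0%N) (x N) (x j) s.
    apply: greenR => //; first by apply: xle => //; exact: ltnW.
    exact: xlt.
  by rewrite e mulrA.
apply: eq_big_nat => j /andP[ij jN].
have j0 : (0 < j)%N by apply: leq_ltn_trans (leq0n i) ij.
have ij1 : (i <= j.-1)%N by rewrite -(leq_add2r 1) !addn1 prednK.
have jN' : (j.-1 <= N)%N := leq_trans (leq_pred j) jN.
rewrite /alphaL mulrC -RintegralZl //; last first.
  apply: gint => //.
  - by apply/andP; split; apply: xle.
  - exact: xle.
  - by apply: xle => //; exact: leq_pred.
  - exact: xle.
apply: eq_Rintegral => s; rewrite inE /= in_itv /= => /andP[s1 s2].
have e : green (x 0%N) (x N) (x i) s = (x i - x 0%N) / (x j.-1 - x 0%N) * green (x 0%N) (x N) (x j.-1) s.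
  apply: greenL => //; first by apply: xlt => //; exact: ltnW.
  exact: xle.
by rewrite e mulrA.
Qed.
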